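(* Let $\mathcal{H}$ be a complex Hilbert space and let $T\in\mathbb{B}(\mathcal{H})$ have Cartesian decomposition $T=T_1+iT_2$, where $T_1=\frac{T+T^*}{2}$ and $T_2=\frac{T-T^*}{2i}$. Then \[ \|T\|^2+\max\big(\alpha(T),\alpha(T^* )\big)\le 2\,\omega^2(T)+D(T). \]
   Context: $\mathbb{B}(\mathcal{H})$ denotes the algebra of bounded linear operators on the complex Hilbert space $\mathcal{H}$. For $T\in\mathbb{B}(\mathcal{H})$: the numerical radius is $\omega(T)=\sup\{|\langle Tx,x\rangle| : x\in\mathcal{H},\ \|x\|=1\}$; $\|T\|$ is the operator norm; $\alpha(T)=\inf_{\|x\|=1}\|Tx\|^2$; and, with $T_1=\frac{T+T^*}{2}$, $T_2=\frac{T-T^*}{2i}$, $D(T)=2\min(\|T_1\|^2,\|T_2\|^2)=\min\left(\frac{\|T-T^*\|^2}{2},\frac{\|T+T^*\|^2}{2}\right)$. *)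

(* Defs.v *)
From Stdlib Require Import Reals.
Open Scope R_scope.

Record Cplx := mkC { Re : R ; Im : R }.

Definition Cadd (a b : Cplx) : Cplx := mkC (Re a + Re b) (Im a + Im b).
Definition Cmul (a b : Cplx) : Cplx :=
  mkC (Re a * Re b - Im a * Im b) (Re a * Im b + Im a * Re b).
Definition Cconj (a : Cplx) : Cplx := mkC (Re a) (- Im a).
Definition Cabs (a : Cplx) : R := sqrt (Re a ^ 2 + Im a ^ 2).
Definition C0 : Cplx := mkC 0 0.
Definition C1 : Cplx := mkC 1 0.
Definition RtoC (r : R) : Cplx := mkC r 0.

Record HilbertSpace := {
  carrier :> Type;
  vzero : carrier;
  vadd : carrier -> carrier -> carrier;
  vopp : carrier -> carrier;
  vscal : Cplx -> carrier -> carrier;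
  inner : carrier -> carrier -> Cplx;
  vadd_assoc : forall x y z, vadd x (vadd y z) = vadd (vadd x y) z;
  vadd_comm : forall x y, vadd x y = vadd y x;
  vadd_0 : forall x, vadd x vzero = x;
  vadd_opp : forall x, vadd x (vopp x) = vzero;
  vscal_1 : forall x, vscal C1 x = x;
  vscal_assoc : forall a b x, vscal a (vscal b x) = vscal (Cmul a b) x;
  vscal_distr_v : forall a x y, vscal a (vadd x y) = vadd (vscal a x) (vscal a y);
  vscal_distr_s : forall a b x, vscal (Cadd a b) x = vadd (vscal a x) (vscal b x);
  inner_lin : forall a x y z,
      inner (vadd (vscal a x) y) z = Cadd (Cmul a (inner x z)) (inner y z);
  inner_sym : forall x y, inner y x = Cconj (inner x y);
  inner_pos : forall x, 0 <= Re (inner x x);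
  inner_def : forall x, inner x x = C0 -> x = vzero;
  complete : forall u : nat -> carrier,
      (forall eps, eps > 0 -> exists N, forall m n, (m >= N)%nat -> (n >= N)%nat ->
         sqrt (Re (inner (vadd (u m) (vopp (u n))) (vadd (u m) (vopp (u n))))) < eps) ->
      exists l, forall eps, eps > 0 -> exists N, forall n, (n >= N)%nat ->
         sqrt (Re (inner (vadd (u n) (vopp l)) (vadd (u n) (vopp l)))) < eps
}.

Arguments vzero {h}.
Arguments vadd {h}.
Arguments vopp {h}.
Arguments vscal {h}.
Arguments inner {h}.

Section Ops.
Variable H : HilbertSpace.

Definition vnorm (x : H) : R := sqrt (Re (inner x x)).

Definition bounded_operator (T : H -> H) : Prop :=
  (forall a x y, T (vadd (vscal a x) y) = vadd (vscal a (T x)) (T y)) /\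
  (exists M, forall x, vnorm (T x) <= M * vnorm x).

Definition is_adjoint (T S : H -> H) : Prop :=
  forall x y, inner (T x) y = inner x (S y).

Definition op_add (A B : H -> H) : H -> H := fun x => vadd (A x) (B x).
Definition op_sub (A B : H -> H) : H -> H := fun x => vadd (A x) (vopp (B x)).
Definition op_scal (c : Cplx) (A : H -> H) : H -> H := fun x => vscal c (A x).

Definition cart_re (T Tadj : H -> H) : H -> H := op_scal (mkC (1/2) 0) (op_add T Tadj).
(* 1/(2i) = -i/2 *)
Definition cart_im (T Tadj : H -> H) : H -> H := op_scal (mkC 0 (-(1/2))) (op_sub T Tadj).

Definition is_glb (E : R -> Prop) (m : R) : Prop :=
  (forall r, E r -> m <= r) /\ (forall b, (forall r, E r -> b <= r) -> b <= m).

Definition is_opnorm (T : H -> H) (n : R) : Prop :=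
  is_lub (fun r => exists x : H, vnorm x = 1 /\ r = vnorm (T x)) n.

Definition is_numrad (T : H -> H) (w : R) : Prop :=
  is_lub (fun r => exists x : H, vnorm x = 1 /\ r = Cabs (inner (T x) x)) w.

Definition is_alpha (T : H -> H) (a : R) : Prop :=
  is_glb (fun r => exists x : H, vnorm x = 1 /\ r = vnorm (T x) ^ 2) a.

End Ops.

Arguments vnorm {H}.
Arguments bounded_operator {H}.
Arguments is_adjoint {H}.
Arguments cart_re {H}.
Arguments cart_im {H}.
Arguments is_opnorm {H}.
Arguments is_numrad {H}.
Arguments is_alpha {H}.

(* Main.v *)
Require Import Defs.
From Stdlib Require Import Reals Lra Psatz.
Open Scope R_scope.

Lemma Ceq (a b : Cplx) : Re a = Re b -> Im a = Im b -> a = b.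
Proof. destruct a, b; simpl; intros; subst; reflexivity. Qed.

Lemma vadd_self_zero (H : HilbertSpace) (x : H) : vadd x x = x -> x = vzero.
Proof.
  intro Hxx. transitivity (vadd (vadd x x) (vopp x)).
  - rewrite <- vadd_assoc, vadd_opp, vadd_0; reflexivity.
  - rewrite Hxx; apply vadd_opp.
Qed.

Lemma inner_addl (H : HilbertSpace) (x y z : H) :
  inner (vadd x y) z = Cadd (inner x z) (inner y z).
Proof.
  rewrite <- (vscal_1 H x) at 1. rewrite inner_lin.
  apply Ceq; simpl; ring.
Qed.

Lemma inner_0l (H : HilbertSpace) (z : H) : inner vzero z = Defs.C0.
Proof.
  pose proof (inner_addl H vzero vzero z) as e. rewrite vadd_0 in e.
  pose proof (f_equal Re e) as e1; pose proof (f_equal Im e) as e2.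
  simpl in e1, e2. apply Ceq; simpl; lra.
Qed.

Lemma inner_scall (H : HilbertSpace) a (x z : H) :
  inner (vscal a x) z = Cmul a (inner x z).
Proof.
  rewrite <- (vadd_0 H (vscal a x)), inner_lin, inner_0l.
  apply Ceq; simpl; ring.
Qed.

Lemma inner_oppl (H : HilbertSpace) (x z : H) :
  inner (vopp x) z = mkC (- Re (inner x z)) (- Im (inner x z)).
Proof.
  pose proof (inner_addl H x (vopp x) z) as e. rewrite vadd_opp, inner_0l in e.
  pose proof (f_equal Re e) as e1; pose proof (f_equal Im e) as e2.
  simpl in e1, e2. apply Ceq; simpl; lra.
Qed.

Lemma inner_addr (H : HilbertSpace) (x y z : H) :
  inner z (vadd x y) = Cadd (inner z x) (inner z y).
Proof.
  rewrite (inner_sym H (vadd x y) z), inner_addl, (inner_sym H x z), (inner_sym H y z).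
  apply Ceq; simpl; ring.
Qed.

Lemma inner_scalr (H : HilbertSpace) a (x z : H) :
  inner z (vscal a x) = Cmul (Cconj a) (inner z x).
Proof.
  rewrite (inner_sym H (vscal a x) z), inner_scall, (inner_sym H x z).
  apply Ceq; simpl; ring.
Qed.

Lemma inner_oppr (H : HilbertSpace) (x z : H) :
  inner z (vopp x) = mkC (- Re (inner z x)) (- Im (inner z x)).
Proof.
  rewrite (inner_sym H (vopp x) z), inner_oppl, (inner_sym H x z).
  apply Ceq; simpl; ring.
Qed.

Lemma Re_sym (H : HilbertSpace) (x y : H) : Re (inner y x) = Re (inner x y).
Proof. rewrite inner_sym; reflexivity. Qed.

Lemma Im_sym (H : HilbertSpace) (x y : H) : Im (inner y x) = - Im (inner x y).
Proof. rewrite inner_sym; reflexivity. Qed.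

Lemma Im_self (H : HilbertSpace) (x : H) : Im (inner x x) = 0.
Proof. pose proof (Im_sym H x x); lra. Qed.

Ltac expand :=
  do 3 rewrite ?inner_addl, ?inner_addr, ?inner_oppl, ?inner_oppr, ?inner_scall, ?inner_scalr;
  cbn [Re Im Cadd Cmul Cconj Defs.C1 Defs.C0].
Ltac expand_in h :=
  do 3 rewrite ?inner_addl, ?inner_addr, ?inner_oppl, ?inner_oppr, ?inner_scall, ?inner_scalr in h;
  cbn [Re Im Cadd Cmul Cconj Defs.C1 Defs.C0] in h.

Lemma zero_of_re (H : HilbertSpace) (x : H) : Re (inner x x) = 0 -> x = vzero.
Proof.
  intro h. apply inner_def. apply Ceq; simpl; [exact h| apply Im_self].
Qed.

Lemma unit_scale (H : HilbertSpace) (y : H) : 0 < Re (inner y y) ->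
  Re (inner (vscal (mkC (/ sqrt (Re (inner y y))) 0) y)
            (vscal (mkC (/ sqrt (Re (inner y y))) 0) y)) = 1.
Proof.
  intro hp. set (r := Re (inner y y)) in *.
  assert (ht : 0 < sqrt r) by (apply sqrt_lt_R0; lra).
  assert (htt : sqrt r * sqrt r = r) by (apply sqrt_sqrt; lra).
  expand. rewrite (Im_self H y). fold r. set (t := sqrt r) in *. clearbody t r. subst r. field. lra.
Qed.

Lemma sq_le (s n : R) : 0 <= s -> sqrt s <= n -> s <= n ^ 2.
Proof.
  intros h1 h2. pose proof (sqrt_sqrt s h1). pose proof (sqrt_pos s). nra.
Qed.

Lemma sq_bound (a d : R) : a ^ 2 <= d ^ 2 -> 0 <= d -> - d <= a <= d.
Proof. intros; split; nra. Qed.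

Lemma vnorm_sq (H : HilbertSpace) (x : H) : vnorm x ^ 2 = Re (inner x x).
Proof. unfold vnorm. rewrite <- Rsqr_pow2. apply Rsqr_sqrt, inner_pos. Qed.

Definition linop (H : HilbertSpace) (T : H -> H) :=
  forall a x y, T (vadd (vscal a x) y) = vadd (vscal a (T x)) (T y).

Lemma T_zero (H : HilbertSpace) (T : H -> H) : linop H T -> T vzero = vzero.
Proof.
  intro Hl. pose proof (Hl Defs.C1 vzero vzero) as e. rewrite !vscal_1, vadd_0 in e.
  apply vadd_self_zero. symmetry; exact e.
Qed.

Lemma T_scal (H : HilbertSpace) (T : H -> H) a (x : H) : linop H T ->
  T (vscal a x) = vscal a (T x).
Proof.
  intro Hl. rewrite <- (vadd_0 H (vscal a x)), Hl, T_zero, vadd_0 by exact Hl. reflexivity.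
Qed.

Lemma unit_exists (H : HilbertSpace) : (exists x : H, x <> vzero) ->
  exists x : H, Re (inner x x) = 1.
Proof.
  intros [y hy]. assert (hp : 0 < Re (inner y y)).
  { destruct (inner_pos H y) as [h|h]; [exact h|]. exfalso; apply hy, zero_of_re; auto. }
  eexists; apply unit_scale; exact hp.
Qed.

Lemma unit_norm (H : HilbertSpace) (x : H) : Re (inner x x) = 1 -> vnorm x = 1.
Proof. intro h; unfold vnorm; rewrite h; apply sqrt_1. Qed.

Lemma NR (H : HilbertSpace) (T : H -> H) w : linop H T -> is_numrad T w ->
  forall y, Re (inner (T y) y) ^ 2 + Im (inner (T y) y) ^ 2 <= w ^ 2 * Re (inner y y) ^ 2.
Proof.
  intros Hl Hw y.
  destruct (inner_pos H y) as [hp|h0].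
  - pose proof (unit_scale H y hp) as hu.
    set (r := Re (inner y y)) in *.
    set (t := sqrt r) in *.
    assert (ht : 0 < t) by (apply sqrt_lt_R0; lra).
    assert (htt : t * t = r) by (apply sqrt_sqrt; lra).
    set (y' := vscal (mkC (/ t) 0) y) in *.
    assert (hb := proj1 Hw _ (ex_intro _ y' (conj (unit_norm H y' hu) eq_refl))).
    cbv beta in hb. unfold y' in hb. rewrite T_scal in hb by exact Hl.
    unfold Cabs in hb. expand_in hb.
    set (a := Re (inner (T y) y)) in *. set (b := Im (inner (T y) y)) in *.
    set (k := / t) in *.
    assert (hk : k * t = 1) by (unfold k; field; lra).
    apply sq_le in hb; [| nra].
    assert (e : (k * (k * a - - 0 * b) - 0 * (k * b + - 0 * a)) ^ 2 +
                (k * (k * b + - 0 * a) + 0 * (k * a - - 0 * b)) ^ 2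
                = k^4 * (a^2 + b^2)) by ring.
    rewrite e in hb.
    assert (e2 : a ^ 2 + b ^ 2 = (t ^ 4) * (k ^ 4 * (a ^ 2 + b ^ 2))).
    { replace (t ^ 4 * (k ^ 4 * (a ^ 2 + b ^ 2))) with ((k * t) ^ 4 * (a ^ 2 + b ^ 2)) by ring.
      rewrite hk; ring. }
    rewrite e2, <- htt.
    replace (w ^ 2 * (t * t) ^ 2) with (t ^ 4 * w ^ 2) by ring.
    apply Rmult_le_compat_l; [|exact hb]. apply pow_le; lra.
  - symmetry in h0. apply zero_of_re in h0. subst y.
    rewrite T_zero by exact Hl. rewrite inner_0l. simpl. nra.
Qed.

Lemma Gpol (H : HilbertSpace) (T : H -> H) w : linop H T -> 0 <= w ->
  (forall y, Re (inner (T y) y) ^ 2 + Im (inner (T y) y) ^ 2 <= w ^ 2 * Re (inner y y) ^ 2) ->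
  forall x z, Re (inner x x) = 1 -> Re (inner z z) = 1 ->
  Re (inner (T x) z) + Re (inner (T z) x) <= 2 * w /\
  Im (inner (T x) z) + Im (inner (T z) x) <= 2 * w.
Proof.
  intros Hl hw Hn x z hx hz.
  set (p := vadd (vscal Defs.C1 z) x).
  set (m := vadd (vscal (mkC (-1) 0) z) x).
  pose proof (Hn p) as Np. pose proof (Hn m) as Nm.
  pose proof (inner_pos H p) as Pp. pose proof (inner_pos H m) as Pm.
  assert (hP : Re (inner p p) + Re (inner m m) = 4).
  { unfold p, m. expand. rewrite hx, hz. ring. }
  set (P := Re (inner p p)) in *. set (M := Re (inner m m)) in *.
  assert (e : w * P + w * M = 4 * w) by (rewrite <- Rmult_plus_distr_l, hP; ring).
  assert (Np1 := Np). assert (Nm1 := Nm).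
  apply (Rle_trans _ _ _ (Rplus_le_compat_r (Im (inner (T p) p) ^ 2) _ _ (pow2_ge_0 (Re (inner (T p) p))))) in Np1.
  apply (Rle_trans _ _ _ (Rplus_le_compat_r (Im (inner (T m) m) ^ 2) _ _ (pow2_ge_0 (Re (inner (T m) m))))) in Nm1.
  assert (Ap : (Re (inner (T p) p)) ^ 2 <= (w * P) ^ 2) by nra.
  assert (Am : (Re (inner (T m) m)) ^ 2 <= (w * M) ^ 2) by nra.
  assert (Bp : (Im (inner (T p) p)) ^ 2 <= (w * P) ^ 2) by nra.
  assert (Bm : (Im (inner (T m) m)) ^ 2 <= (w * M) ^ 2) by nra.
  apply sq_bound in Ap; [|nra]. apply sq_bound in Am; [|nra].
  apply sq_bound in Bp; [|nra]. apply sq_bound in Bm; [|nra].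
  unfold p, m in Ap, Am, Bp, Bm. rewrite !Hl in Ap, Am, Bp, Bm.
  expand_in Ap. expand_in Am. expand_in Bp. expand_in Bm.
  split; lra.
Qed.

Lemma Vbound (H : HilbertSpace) (v : H) w : 0 <= w ->
  (forall z, Re (inner z z) = 1 -> Re (inner v z) <= w) -> Re (inner v v) <= w ^ 2.
Proof.
  intros hw h.
  destruct (inner_pos H v) as [hp|h0]; [|rewrite <- h0; nra].
  pose proof (unit_scale H v hp) as hu. specialize (h _ hu).
  set (r := Re (inner v v)) in *.
  assert (ht : 0 < sqrt r) by (apply sqrt_lt_R0; lra).
  assert (htt : sqrt r * sqrt r = r) by (apply sqrt_sqrt; lra).
  expand_in h. rewrite (Im_self H v) in h. fold r in h.
  set (t := sqrt r) in *. clearbody t r. subst r.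
  replace (/ t * (t * t) - - 0 * 0) with t in h by (field; lra).
  nra.
Qed.

Lemma CS (H : HilbertSpace) (x q : H) : Re (inner x x) = 1 ->
  Re (inner x q) ^ 2 <= Re (inner q q).
Proof.
  intro hx. set (a := Re (inner x q)).
  pose proof (inner_pos H (vadd (vscal (mkC (-a) 0) x) q)) as h.
  expand_in h. rewrite hx, (Re_sym H x q), (Im_sym H x q), (Im_self H x) in h.
  fold a in h. nra.
Qed.

Lemma cart_re_z (H : HilbertSpace) (T Tadj : H -> H) x z : is_adjoint T Tadj ->
  Re (inner (cart_re T Tadj x) z) = / 2 * (Re (inner (T x) z) + Re (inner (T z) x)).
Proof.
  intro Ha. unfold cart_re, op_scal, op_add. expand.
  rewrite (Re_sym H z (Tadj x)), <- (Ha z x). field.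
Qed.

Lemma cart_im_z (H : HilbertSpace) (T Tadj : H -> H) x z : is_adjoint T Tadj ->
  Re (inner (cart_im T Tadj x) z) = / 2 * (Im (inner (T x) z) + Im (inner (T z) x)).
Proof.
  intro Ha. unfold cart_im, op_scal, op_sub. expand.
  rewrite (Im_sym H z (Tadj x)), <- (Ha z x). field.
Qed.

Lemma cart_sum (H : HilbertSpace) (T Tadj : H -> H) x :
  Re (inner (T x) (T x)) + Re (inner (Tadj x) (Tadj x)) =
  2 * Re (inner (cart_re T Tadj x) (cart_re T Tadj x)) +
  2 * Re (inner (cart_im T Tadj x) (cart_im T Tadj x)).
Proof.
  unfold cart_re, cart_im, op_scal, op_add, op_sub. expand.
  rewrite (Re_sym H (T x) (Tadj x)), (Im_sym H (T x) (Tadj x)),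
    (Im_self H (T x)), (Im_self H (Tadj x)). field.
Qed.

Lemma norm_unit (H : HilbertSpace) (x : H) : vnorm x = 1 -> Re (inner x x) = 1.
Proof. intro h. rewrite <- vnorm_sq, h. ring. Qed.

Lemma lub_sq (H : HilbertSpace) (T : H -> H) n B : is_opnorm T n ->
  (exists x : H, Re (inner x x) = 1) ->
  (forall x, Re (inner x x) = 1 -> Re (inner (T x) (T x)) <= B) -> n ^ 2 <= B.
Proof.
  intros [Hub Hlub] [x0 hx0] hB.
  assert (hB0 : 0 <= B) by (pose proof (inner_pos H (T x0)); pose proof (hB x0 hx0); lra).
  assert (hn0 : 0 <= n).
  { apply Rle_trans with (vnorm (T x0)); [apply sqrt_pos|].
    apply Hub. exists x0; split; [apply unit_norm; exact hx0|reflexivity]. }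
  assert (hn : n <= sqrt B).
  { apply Hlub. intros r [x [hx ->]]. apply sqrt_le_1_alt. apply hB, norm_unit, hx. }
  pose proof (sqrt_sqrt B hB0). pose proof (sqrt_pos B). nra.
Qed.

Theorem theorem2p1 (H : HilbertSpace) (T Tadj : H -> H)
  (Hnontriv : exists x : H, x <> vzero)
  (HT : bounded_operator T) (Hadj : is_adjoint T Tadj)
  (nT nT1 nT2 w aT aTadj : R)
  (HnT : is_opnorm T nT)
  (HnT1 : is_opnorm (cart_re T Tadj) nT1)
  (HnT2 : is_opnorm (cart_im T Tadj) nT2)
  (Hw : is_numrad T w)
  (HaT : is_alpha T aT)
  (HaTadj : is_alpha Tadj aTadj) :
  nT ^ 2 + Rmax aT aTadj <= 2 * w ^ 2 + 2 * Rmin (nT1 ^ 2) (nT2 ^ 2).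
Proof.
  destruct HT as [Hl _].
  pose proof (unit_exists H Hnontriv) as hu0.
  assert (hw : 0 <= w).
  { destruct hu0 as [x0 hx0]. apply Rle_trans with (Cabs (inner (T x0) x0)); [apply sqrt_pos|].
    apply (proj1 Hw). exists x0; split; [apply unit_norm; exact hx0|reflexivity]. }
  pose proof (NR H T w Hl Hw) as Nb.
  pose proof (Gpol H T w Hl hw Nb) as G.
  set (K := 2 * w ^ 2 + 2 * Rmin (nT1 ^ 2) (nT2 ^ 2)).
  assert (Kb : forall x, Re (inner x x) = 1 ->
            Re (inner (T x) (T x)) + Re (inner (Tadj x) (Tadj x)) <= K).
  { intros x hx. rewrite cart_sum.
    assert (a1 : Re (inner (cart_re T Tadj x) (cart_re T Tadj x)) <= w ^ 2).
    { apply Vbound; [exact hw|]. intros z hz. rewrite cart_re_z by exact Hadj.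
      destruct (G x z hx hz); lra. }
    assert (a2 : Re (inner (cart_im T Tadj x) (cart_im T Tadj x)) <= w ^ 2).
    { apply Vbound; [exact hw|]. intros z hz. rewrite cart_im_z by exact Hadj.
      destruct (G x z hx hz); lra. }
    assert (b1 : Re (inner (cart_re T Tadj x) (cart_re T Tadj x)) <= nT1 ^ 2).
    { apply sq_le; [apply inner_pos|]. apply (proj1 HnT1).
      exists x; split; [apply unit_norm; exact hx|reflexivity]. }
    assert (b2 : Re (inner (cart_im T Tadj x) (cart_im T Tadj x)) <= nT2 ^ 2).
    { apply sq_le; [apply inner_pos|]. apply (proj1 HnT2).
      exists x; split; [apply unit_norm; exact hx|reflexivity]. }
    unfold K, Rmin; destruct (Rle_dec (nT1 ^ 2) (nT2 ^ 2)); lra. }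
  assert (al1 : forall x, Re (inner x x) = 1 -> aT <= Re (inner (T x) (T x))).
  { intros x hx. rewrite <- vnorm_sq. apply (proj1 HaT).
    exists x; split; [apply unit_norm; exact hx|reflexivity]. }
  assert (al2 : forall x, Re (inner x x) = 1 -> aTadj <= Re (inner (Tadj x) (Tadj x))).
  { intros x hx. rewrite <- vnorm_sq. apply (proj1 HaTadj).
    exists x; split; [apply unit_norm; exact hx|reflexivity]. }
  assert (B1 : nT ^ 2 <= K - aTadj).
  { apply (lub_sq H T); [exact HnT|exact hu0|]. intros x hx.
    pose proof (Kb x hx); pose proof (al2 x hx); lra. }
  assert (B2 : nT ^ 2 <= K - aT).
  { apply (lub_sq H T); [exact HnT|exact hu0|]. intros x hx.
    destruct (inner_pos H (T x)) as [hp|h0].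
    2:{ rewrite <- h0. pose proof (Kb x hx); pose proof (al1 x hx);
        pose proof (inner_pos H (Tadj x)); lra. }
    pose proof (unit_scale H (T x) hp) as hy.
    set (y := vscal (mkC (/ sqrt (Re (inner (T x) (T x)))) 0) (T x)) in *.
    pose proof (CS H x (Tadj y) hx) as hc.
    rewrite <- (Hadj x y) in hc.
    set (r := Re (inner (T x) (T x))) in *.
    assert (ht : 0 < sqrt r) by (apply sqrt_lt_R0; lra).
    assert (htt : sqrt r * sqrt r = r) by (apply sqrt_sqrt; lra).
    assert (e : Re (inner (T x) y) = sqrt r).
    { unfold y. expand. rewrite (Im_self H (T x)). fold r.
      set (t := sqrt r) in *. clearbody t r. subst r. field. lra. }
    rewrite e in hc.
    pose proof (Kb y hy); pose proof (al1 y hy).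
    set (t := sqrt r) in *. clearbody t r y. subst r.
    nra. }
  unfold Rmax; destruct (Rle_dec aT aTadj); fold K; lra.
Qed.
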